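(* Let $\mathcal{D}=\{(x_i,a_i,y_i)\}_{i=1}^N$ be a dataset with $a_i\in\{1,2\}$, $y_i\in\{0,1\}$, and let $\mathcal{R}$ be a group-aware Bayes-optimal score (GABOS) function with respect to $\mathcal{D}$. Let the loss $\mathcal{L}$ be the misclassification error on $\mathcal{D}$ of the (normalized) thresholding of $\mathcal{R}$, and let the bias $\mathcal{B}$ be the demographic-parity bias or the equal-opportunity bias on $\mathcal{D}$. Then the post-processing method applied to $\mathcal{R}$ is slack-consistent: for every individual $(x,a)$, the prediction $f_\beta(x,a)$ of the returned classifier is monotonic in the slack $\beta>0$.
   Context: GABOS function: $\mathcal{R}$ is group-aware Bayes-optimal with respect to $\mathcal{D}$ if for every $(x,a)$ appearing in $\mathcal{D}$, $\mathcal{R}(x,a)$ equals the empirical probability that $(x,a)$ is labeled positively in $\mathcal{D}$, i.e. $\mathcal{R}(x,a)=|\{i: x_i=x,a_i=a,y_i=1\}|/|\{i:x_i=x,a_i=a\}|$. A (stochastic) classifier $f$ gives probability $f(x,a)\in[0,1]$ of a positive prediction. Demographic-parity bias: $\mathcal{B}(f)=\frac{\sum_i f(x_i,a_i)\mathbb{1}[a_i=1]}{\sum_i\mathbb{1}[a_i=1]}-\frac{\sum_i f(x_i,a_i)\mathbb{1}[a_i=2]}{\sum_i\mathbb{1}[a_i=2]}$. Equal-opportunity bias: the same with the additional restriction $y_i=1$ in every indicator. Normalized thresholds: for group $a$, a normalized threshold $\tau\in[0,1]$ denotes a threshold classifier on $\mathcal{R}(x,a)$ in group $a$, randomized over at most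 two adjacent deterministic thresholds, whose positive prediction rate in group $a$ (on $\mathcal{D}$) equals $1-\tau$. A pair $(\tau_1,\tau_2)$ defines a classifier (group $a$ uses $\tau_a$) with loss $\mathcal{L}(\tau_1,\tau_2)$ and bias $\mathcal{B}(\tau_1,\tau_2)$. Post-processing method with slack $\beta>0$: among all $(\tau_1,\tau_2)\in[0,1]^2$ minimizing $\mathcal{L}(\tau_1,\tau_2)$ subject to $|\mathcal{B}(\tau_1,\tau_2)|\le\beta$, keep those with smallest $|\mathcal{B}|$; among those the ones with smallest $\tau_1$; among those return the one with smallest $\tau_2$. The resulting classifier is $f_\beta$. Slack-consistency: for every individual $(x,a)$ and all $\beta_1<\beta_2<\beta_3$, either $f_{\beta_1}(x,a)\le f_{\beta_2}(x,a)\le f_{\beta_3}(x,a)$ or $f_{\beta_1}(x,a)\ge f_{\beta_2}(x,a)\ge f_{\beta_3}(x,a)$. *)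

(* Defs.v *)
From HB Require Import structures.
From mathcomp Require Import all_boot all_order all_algebra.
From mathcomp Require Import reals.
Set Implicit Arguments. Unset Strict Implicit. Unset Printing Implicit Defensive.
Import Order.TTheory GRing.Theory Num.Theory.
Local Open Scope ring_scope.

(* A data point (x_i, a_i, y_i) is a triple ((x, a), y) with a : nat in {1,2}
   and y : bool (true = label 1). *)
Section Fair.
Variables (R : realType) (X : eqType).
Notation pt := (X * nat * bool)%type.

Definition xi (d : pt) : X := d.1.1.
Definition ai (d : pt) : nat := d.1.2.
Definition yi (d : pt) : bool := d.2.

Definition GABOS (S : X -> nat -> R) (D : seq pt) : Prop :=
  forall d, d \in D ->
    S (xi d) (ai d) =
      (count (fun e => [&& xi e == xi d, ai e == ai d & yi e]) D)%:R /
      (count (fun e => (xi e == xi d) && (ai e == ai d)) D)%:R.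

Definition grp_mass (S : X -> nat -> R) (D : seq pt) (a : nat) (P : R -> bool) : R :=
  (count (fun e => (ai e == a) && P (S (xi e) (ai e))) D)%:R /
  (count (fun e => ai e == a) D)%:R.

(* Normalized threshold tau in group a: threshold classifier on the score in
   group a, randomized over (at most) two adjacent deterministic thresholds,
   with positive prediction rate 1 - tau in group a: points with score strictly
   above the cut level get 1, below get 0, at the cut level get the probability
   making the rate exactly 1 - tau. *)
Definition thr (S : X -> nat -> R) (D : seq pt) (a : nat) (tau : R) (x : X) : R :=
  let r := S x a in
  let G := grp_mass S D a (fun s => r < s) in
  let E := grp_mass S D a (fun s => s == r) in
  Num.min 1 (Num.max 0 ((1 - tau - G) / E)).

Definition clf (S : X -> nat -> R) (D : seq pt) (t : R * R) (x : X) (a : nat) : R :=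
  if a == 1%N then thr S D 1 t.1 x else thr S D 2 t.2 x.

Definition loss (S : X -> nat -> R) (D : seq pt) (t : R * R) : R :=
  (\sum_(d <- D) (if yi d then 1 - clf S D t (xi d) (ai d)
                           else clf S D t (xi d) (ai d))) / (size D)%:R.

Inductive bias_kind := DemParity | EqOpportunity.

Definition in_pop (k : bias_kind) (a : nat) (d : pt) : bool :=
  match k with
  | DemParity => ai d == a
  | EqOpportunity => (ai d == a) && yi d
  end.

Definition pop_mean (S : X -> nat -> R) (D : seq pt) (k : bias_kind) (a : nat)
    (t : R * R) : R :=
  (\sum_(d <- D | in_pop k a d) clf S D t (xi d) (ai d)) / (count (in_pop k a) D)%:R.

Definition bias (S : X -> nat -> R) (D : seq pt) (k : bias_kind) (t : R * R) : R :=
  pop_mean S D k 1 t - pop_mean S D k 2 t.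

Definition feasible S D k (beta : R) (t : R * R) : Prop :=
  [/\ 0 <= t.1 <= 1, 0 <= t.2 <= 1 & `|bias S D k t| <= beta].
Definition sel1 S D k beta (t : R * R) : Prop :=
  feasible S D k beta t /\ forall t', feasible S D k beta t' -> loss S D t <= loss S D t'.
Definition sel2 S D k beta (t : R * R) : Prop :=
  sel1 S D k beta t /\ forall t', sel1 S D k beta t' -> `|bias S D k t| <= `|bias S D k t'|.
Definition sel3 S D k beta (t : R * R) : Prop :=
  sel2 S D k beta t /\ forall t', sel2 S D k beta t' -> t.1 <= t'.1.
Definition returned S D k beta (t : R * R) : Prop :=
  sel3 S D k beta t /\ forall t', sel3 S D k beta t' -> t.2 <= t'.2.

End Fair.

(* Main.v *)
Require Import Defs.
From HB Require Import structures.
From mathcomp Require Import all_boot all_order all_algebra.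
From mathcomp Require Import reals.
From mathcomp Require Import all_classical all_reals all_analysis.
From mathcomp Require Import ring lra.
Import Order.TTheory GRing.Theory Num.Theory.
Import numFieldNormedType.Exports.
Local Open Scope ring_scope.

Module Aux.
Set Implicit Arguments. Unset Strict Implicit. Unset Printing Implicit Defensive.
Section Abs.
Local Open Scope classical_set_scope.
Variable R : realType.

Lemma cont_fst : continuous (fst : R * R -> R).
Proof. move=> t; exact: cvg_fst. Qed.
Lemma cont_snd : continuous (snd : R * R -> R).
Proof. move=> t; exact: cvg_snd. Qed.

Lemma cont_sep (f g : R -> R) : continuous f -> continuous g ->
  continuous (fun t : R * R => f t.1 + g t.2).
Proof.
move=> cf cg t.
apply: (@continuousD _ _ _ (f \o fst) (g \o snd)).
  apply: continuous_comp; [exact: cont_fst | exact: cf].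
apply: continuous_comp; [exact: cont_snd | exact: cg].
Qed.

Lemma cont_norm (f : R * R -> R) : continuous f -> continuous (fun t => `|f t|).
Proof. move=> cf t; apply: (continuous_comp (cf t)); exact: norm_continuous. Qed.

Lemma step (A : set (R * R)) (f : R * R -> R) :
  compact A -> A !=set0 -> continuous f ->
  exists2 c, A c & forall t, A t -> f c <= f t.
Proof.
move=> cA A0 cf.
have [c cA' H] := compact_EVT_min A0 cA (continuous_subspaceT (A:=A) cf).
exists c; first by rewrite inE in cA'.
by move=> t At; apply: H; rewrite inE.
Qed.

Lemma closed_sub (f : R * R -> R) (m : R) : continuous f -> closed [set t | f t <= m].
Proof.
move=> cf; have := (proj1 (continuous_closedP f) cf) _ (@closed_le _ m).
by [].
Qed.

Lemma box_compact : compact (`[(0:R), 1] `*` `[(0:R), 1]).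
Proof. apply: compact_setX; exact: segment_compact. Qed.


Lemma chain (P : R * R -> Prop) (f : R * R -> R) (A : set (R * R)) :
  compact A -> A !=set0 -> continuous f -> (forall t, A t <-> P t) ->
  exists A', [/\ compact A', A' !=set0 &
     forall t, A' t <-> (P t /\ forall t', P t' -> f t <= f t')].
Proof.
move=> cA A0 cf AP.
have [c Ac Hc] := step cA A0 cf.
exists (A `&` [set t | f t <= f c]); split.
- apply: compact_closedI => //; exact: closed_sub.
- by exists c; split => //=.
move=> t; split.
  case=> /AP Pt /= ftc; split => // t' /AP Pt'.
  exact: le_trans ftc (Hc _ Pt').
case=> /[dup] Pt /AP At H; split => //=.
by apply: H; apply/AP.
Qed.

Section Sel.
Variables (Lf Bf : R * R -> R).
Definition feasA (beta : R) (t : R * R) : Prop :=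
  [/\ 0 <= t.1 <= 1, 0 <= t.2 <= 1 & `|Bf t| <= beta].
Definition sel1A beta (t : R * R) : Prop :=
  feasA beta t /\ forall t', feasA beta t' -> Lf t <= Lf t'.
Definition sel2A beta (t : R * R) : Prop :=
  sel1A beta t /\ forall t', sel1A beta t' -> `|Bf t| <= `|Bf t'|.
Definition sel3A beta (t : R * R) : Prop :=
  sel2A beta t /\ forall t', sel2A beta t' -> t.1 <= t'.1.
Definition retA beta (t : R * R) : Prop :=
  sel3A beta t /\ forall t', sel3A beta t' -> t.2 <= t'.2.

Lemma exists_ret beta : continuous Lf -> continuous Bf ->
  (exists t0, feasA beta t0) -> exists t, retA beta t.
Proof.
move=> cL cB [t0 Ht0].
pose A := `[(0:R), 1] `*` `[(0:R), 1] `&` [set t | `|Bf t| <= beta].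
have cA : compact A.
  apply: compact_closedI; [exact: box_compact | exact: closed_sub (cont_norm cB)].
have AP : forall t, A t <-> feasA beta t.
  move=> t; rewrite /A /feasA /=; split.
    by case=> [[/= h1 h2] h3]; split => //; move: h1 h2; rewrite /= !in_itv.
  by case=> h1 h2 h3; split => //; split; rewrite /= in_itv.
have A0 : A !=set0 by exists t0; apply/AP.
have [A1 [cA1 A10 H1]] := chain cA A0 cL AP.
have [A2 [cA2 A20 H2]] := chain cA1 A10 (cont_norm cB) H1.
have [A3 [cA3 A30 H3]] := chain cA2 A20 (@cont_fst) H2.
have [A4 [cA4 [t At] H4]] := chain cA3 A30 (@cont_snd) H3.
by exists t; apply/H4.
Qed.
End Sel.
Lemma arith (x y z : R) : `|x| <= `|y| -> `|y| <= `|z| ->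
  (x < 0 -> y <= 0) -> (0 < x -> 0 <= y) -> (y < 0 -> z <= 0) -> (0 < y -> 0 <= z) ->
  (x <= y <= z) \/ (z <= y <= x).
Proof.
move=> h1 h2 h3 h4 h5 h6.
case: (ltgtP x 0) => hx; case: (ltgtP y 0) => hy; case: (ltgtP z 0) => hz;
  move: h1 h2; rewrite ?(ltr0_norm hx) ?(gtr0_norm hx) ?(ltr0_norm hy) ?(gtr0_norm hy)
     ?(ltr0_norm hz) ?(gtr0_norm hz) ?hx ?hy ?hz ?normr0 => h1 h2;
  first [ by left; apply/andP; split; lra | by right; apply/andP; split; lra
        | by exfalso; move: (h3 hx) (h4 hx) (h5 hy) (h6 hy); lra
        | idtac ].
all: try (by exfalso; have := h3 hx; lra).
all: try (by exfalso; have := h4 hx; lra).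
all: try (by exfalso; have := h5 hy; lra).
all: try (by exfalso; have := h6 hy; lra).
Qed.
Definition clip (v : R) := Num.min 1 (Num.max 0 v).
Lemma clip_ge0 v : 0 <= clip v.
Proof. rewrite /clip le_min ler01 /=. by rewrite le_max lexx. Qed.
Lemma clip_le1 v : clip v <= 1.
Proof. by rewrite /clip ge_min lexx. Qed.
Lemma clip_mono u v : u <= v -> clip u <= clip v.
Proof.
move=> uv; rewrite /clip le_min clip_le1 /=.
apply: (@le_trans _ _ (Num.max 0 u)); first by rewrite ge_min lexx orbT.
by rewrite ge_max !le_max lexx uv orbT.
Qed.
Lemma clip0 v : v <= 0 -> clip v = 0.
Proof. move=> h; apply/le_anti; rewrite clip_ge0 andbT /clip ge_min; apply/orP; right; by rewrite ge_max lexx h. Qed.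
Lemma clip1 v : 1 <= v -> clip v = 1.
Proof. move=> h; apply/le_anti; rewrite clip_le1 /= /clip le_min lexx /= le_max h orbT //. Qed.

Definition CVI (l g : R -> R) := forall p q lam, 0 <= p <= 1 -> 0 <= q <= 1 ->
  0 <= lam <= 1 -> exists r, [/\ 0 <= r <= 1, g r = (1 - lam) * g p + lam * g q &
     l r <= (1 - lam) * l p + lam * l q].

Lemma pairX l g : CVI l g -> forall p p' w w', 0 <= p <= 1 -> 0 <= p' <= 1 ->
  w + w' = g p + g p' -> (g p <= w <= g p') \/ (g p' <= w <= g p) ->
  exists r r', [/\ 0 <= r <= 1, 0 <= r' <= 1, g r = w, g r' = w' &
     l r + l r' <= l p + l p'].
Proof.
move=> C p p' w w' hp hp' hs hw.
case: (eqVneq (g p) (g p')) => E.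
  have ew : w = g p by case: hw => /andP[h1 h2]; apply/le_anti; apply/andP; split; lra.
  exists p, p'; split => //; lra.
set d := g p' - g p.
have dn : d != 0 by rewrite subr_eq0 eq_sym.
set lam := (w - g p) / d.
have hl : lam * d = w - g p by rewrite /lam mulfVK.
have dE : d = g p' - g p by [].
have l01 : 0 <= lam <= 1.
  clearbody lam d.
  case: (ltgtP d 0) => hd; last by move: dn; rewrite hd eqxx.
  - case: hw => /andP[h1 h2]; apply/andP; split; nra.
  - case: hw => /andP[h1 h2]; apply/andP; split; nra.
have [r [hr gr lr]] := C p p' lam hp hp' l01.
have [r' [hr' gr' lr']] := C p' p lam hp' hp l01.
exists r, r'; split => //.
- rewrite gr; have : lam * d = w - g p by []; rewrite /d; lra.
- rewrite gr'; have : lam * d = w - g p by []; rewrite /d; lra.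
- lra.
Qed.

Lemma sr_generic (I : eqType) (s : seq I) (pf : I -> R -> R) (al om : I -> R)
    (C C' c1 c2 a b c : R) :
  0 <= c1 -> 0 <= c2 ->
  (forall e e', e \in s -> e' \in s ->
     (pf e b - pf e c) * (pf e' a - pf e' b) * (al e * om e' - al e' * om e) <= 0) ->
  forall l g : R -> R,
  (forall t, l t = C + c1 * \sum_(e <- s) al e * pf e t) ->
  (forall t, g t = C' + c2 * \sum_(e <- s) om e * pf e t) ->
  (l b - l c) * (g a - g b) <= (l a - l b) * (g b - g c).
Proof.
move=> c10 c20 H l g hl hg.
have dl u v : l u - l v = c1 * \sum_(e <- s) al e * (pf e u - pf e v).
  rewrite !hl opprD addrACA subrr add0r -mulrBr; congr (_ * _).
  by rewrite -sumrB; apply: eq_bigr => e _; rewrite mulrBr.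
have dg u v : g u - g v = c2 * \sum_(e <- s) om e * (pf e u - pf e v).
  rewrite !hg opprD addrACA subrr add0r -mulrBr; congr (_ * _).
  by rewrite -sumrB; apply: eq_bigr => e _; rewrite mulrBr.
rewrite !dl !dg.
set S1 := \sum_(e <- s) al e * _.
set S2 := \sum_(e <- s) om e * _.
set S3 := \sum_(e <- s) al e * _.
set S4 := \sum_(e <- s) om e * _.
have key : S1 * S2 - S3 * S4 <= 0.
  have -> : S1 * S2 - S3 * S4 = \sum_(e <- s) \sum_(e' <- s)
      ((pf e b - pf e c) * (pf e' a - pf e' b) * (al e * om e' - al e' * om e)).
    rewrite /S1 /S2 /S3 /S4 big_distrl [X in _ - X]mulrC big_distrl -sumrB /=.
    apply: eq_bigr => e _; rewrite !big_distrr -sumrB /=.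
    by apply: eq_bigr => e' _; ring.
  rewrite big_seq; apply: sumr_le0 => e es.
  rewrite big_seq; apply: sumr_le0 => e' e's.
  exact: H.
have := mulr_ge0 c10 c20; nra.
Qed.

Lemma cvi_of_sr (l g : R -> R) : continuous g ->
  (forall x y, x <= y -> g y <= g x) ->
  (forall a b c, 0 <= a -> a <= b -> b <= c -> c <= 1 ->
     (l b - l c) * (g a - g b) <= (l a - l b) * (g b - g c)) -> CVI l g.
Proof.
move=> cg gm sr.
suff H : forall p q lam, 0 <= p -> p <= q -> q <= 1 -> 0 <= lam <= 1 ->
    exists r, [/\ 0 <= r <= 1, g r = (1 - lam) * g p + lam * g q &
     l r <= (1 - lam) * l p + lam * l q].
  move=> p q lam /andP[p0 p1] /andP[q0 q1] /andP[l0 l1].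
  case: (leP p q) => pq.
    by apply: H => //; apply/andP; split.
  have [r [hr gr lr]] := H q p (1 - lam) q0 (ltW pq) p1 ltac:(apply/andP; split; lra).
  exists r; split => //; [rewrite gr; ring | lra].
move=> p q lam p0 pq q1 /andP[l0 l1].
have gqp : g q <= g p by exact: gm.
set w := (1 - lam) * g p + lam * g q.
have [c cin gc] := @IVT R g p q w pq (continuous_subspaceT (A := `[p, q]) cg)
  ltac:(rewrite (min_r gqp) (max_l gqp); apply/andP; split; rewrite /w; nra).
move: cin; rewrite in_itv /= => /andP[pc cq].
case: (eqVneq (g p) (g q)) => E.
  case: (leP (l p) (l q)) => hl.
    exists p; split; [apply/andP; split; lra | rewrite /w -E; ring | nra].
  exists q; split; [apply/andP; split; lra | rewrite /w E; ring | nra].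
have Dp : 0 < g p - g q by rewrite subr_gt0 lt_neqAle eq_sym E gqp.
exists c; split; first (apply/andP; split; lra).
  by [].
have := sr p c q p0 pc cq q1.
rewrite gc /w => h.
have h2 : (g p - g q) * (l c - (1 - lam) * l p - lam * l q) <= 0 by nra.
have : l c - (1 - lam) * l p - lam * l q <= 0.
  by rewrite -(pmulr_rle0 _ Dp).
lra.
Qed.

Section Mono.
Variables (l1 l2 g1 g2 : R -> R).
Hypotheses (Hg1 : forall x y, x <= y -> g1 y <= g1 x)
           (Hg2 : forall x y, x <= y -> g2 y <= g2 x)
           (C1 : CVI l1 g1) (C2 : CVI l2 g2).
Let Lf (t : R * R) := l1 t.1 + l2 t.2.
Let Bf (t : R * R) := g1 t.1 - g2 t.2.
Local Notation ret := (retA Lf Bf).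

Lemma absB_mono b b' t t' : b <= b' -> ret b t -> ret b' t' -> `|Bf t| <= `|Bf t'|.
Proof.
move=> bb [[[[[h1 h2 h3] HLt] HBt] H1t] H2t] [[[[[h1' h2' h3'] HLt'] HBt'] H1t'] H2t'].
have Lt't : Lf t' <= Lf t by apply: HLt'; split => //; exact: le_trans h3 bb.
case: (leP `|Bf t'| b) => h; last by apply: ltW; exact: le_lt_trans h3 h.
have Ltt' : Lf t <= Lf t' by apply: HLt; split.
apply: HBt; split; first by split.
by move=> t'' F''; apply: le_trans Lt't (HLt _ F'').
Qed.

Lemma no_flip b b' t t' : b <= b' -> ret b t -> ret b' t' ->
  Bf t < 0 < Bf t' \/ Bf t' < 0 < Bf t -> False.
Proof.
move=> bb [[[[[h1 h2 h3] HLt] HBt] H1t] H2t] [[[[[h1' h2' h3'] HLt'] HBt'] H1t'] H2t'] hs.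
set d := Bf t - Bf t'.
have dn : d != 0.
  by rewrite /d subr_eq0; case: hs => /andP[u v]; apply/eqP => E; move: u v; rewrite E; lra.
set lam := Bf t / d.
have hl : lam * d = Bf t by rewrite /lam mulfVK.
have l01 : 0 <= lam <= 1.
  case: hs => /andP[u v]; case: (ltgtP d 0) => hd; (try by move: dn; rewrite hd eqxx);
  apply/andP; split; move: hl; rewrite /d => hl; nra.
have [r1 [hr1 gr1 lr1]] := C1 h1 h1' l01.
have [r2 [hr2 gr2 lr2]] := C2 h2 h2' l01.
have Bs : Bf (r1, r2) = 0.
  rewrite /Bf /= gr1 gr2; move: hl; rewrite /d /Bf; nra.
have Ls : Lf (r1, r2) <= (1 - lam) * Lf t + lam * Lf t' by rewrite /Lf /=; lra.
have Fs : feasA Bf b (r1, r2) by split => //; rewrite Bs normr0; exact: le_trans (normr_ge0 _) h3.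
have Lts := HLt _ Fs.
have Lt't : Lf t' <= Lf t by apply: HLt'; split => //; exact: le_trans h3 bb.
have S1s : sel1A Lf Bf b (r1, r2).
  split => // t'' F''; apply: le_trans (HLt _ F'').
  case/andP: l01 => l0 l1'; nra.
have := HBt _ S1s; rewrite Bs normr0 normr_le0 => /eqP E.
by case: hs => /andP[u v]; move: u v; rewrite E; lra.
Qed.

Lemma monoM b b' t t' : ret b t -> ret b' t' -> Bf t <= Bf t' ->
  t'.1 <= t.1 /\ t.2 <= t'.2.
Proof.
move=> [[[[[h1 h2 h3] HLt] HBt] H1t] H2t] [[[[[h1' h2' h3'] HLt'] HBt'] H1t'] H2t'] Hle.
split.
- rewrite leNgt; apply/negP => Hlt.
  have g1le : g1 t'.1 <= g1 t.1 by apply: Hg1; exact: ltW.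
  have [r [r' [hr hr' gr gr' hl]]] := pairX C2 (w := g1 t.1 - Bf t') (w' := g1 t'.1 - Bf t)
     h2 h2' ltac:(rewrite /Bf; ring)
     ltac:(right; apply/andP; split; rewrite /Bf in Hle *; lra).
  have Bv : Bf (t.1, r) = Bf t' by rewrite /Bf /= gr /Bf; ring.
  have Bu : Bf (t'.1, r') = Bf t by rewrite /Bf /= gr' /Bf; ring.
  have Fv : feasA Bf b' (t.1, r) by split => //; rewrite Bv.
  have Fu : feasA Bf b (t'.1, r') by split => //; rewrite Bu.
  have Lu := HLt _ Fu.
  have Lv : Lf (t.1, r) <= Lf t' by move: Lu; rewrite /Lf /=; lra.
  have S1v : sel1A Lf Bf b' (t.1, r).
    by split => // t'' F''; apply: le_trans Lv (HLt' _ F'').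
  have S2v : sel2A Lf Bf b' (t.1, r) by split => // t'' S''; rewrite Bv; exact: HBt'.
  have := H1t' _ S2v => /=; lra.
- rewrite leNgt; apply/negP => Hlt.
  have g2le : g2 t.2 <= g2 t'.2 by apply: Hg2; exact: ltW.
  case: (eqVneq (g2 t'.2) (g2 t.2)) => Heq.
    have Bu : Bf (t.1, t'.2) = Bf t by rewrite /Bf /= Heq.
    have Bv : Bf (t'.1, t.2) = Bf t' by rewrite /Bf /= Heq.
    have Fv : feasA Bf b' (t'.1, t.2) by split => //; rewrite Bv.
    have Fu : feasA Bf b (t.1, t'.2) by split => //; rewrite Bu.
    have Lv := HLt' _ Fv.
    have Lu : Lf (t.1, t'.2) <= Lf t by move: Lv; rewrite /Lf /=; lra.
    have S1u : sel1A Lf Bf b (t.1, t'.2).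
      by split => // t'' F''; apply: le_trans Lu (HLt _ F'').
    have S2u : sel2A Lf Bf b (t.1, t'.2) by split => // t'' S''; rewrite Bu; exact: HBt.
    have S3u : sel3A Lf Bf b (t.1, t'.2) by split => // t'' S''; exact: H1t.
    have := H2t _ S3u => /=; lra.
  have g2lt : g2 t.2 < g2 t'.2 by rewrite lt_neqAle g2le eq_sym Heq.
  have [r [r' [hr hr' gr gr' hl]]] := pairX C1 (w := Bf t + g2 t'.2) (w' := Bf t' + g2 t.2)
     h1 h1' ltac:(rewrite /Bf; ring)
     ltac:(left; apply/andP; split; rewrite /Bf in Hle *; lra).
  have Bu : Bf (r, t'.2) = Bf t by rewrite /Bf /= gr /Bf; ring.
  have Bv : Bf (r', t.2) = Bf t' by rewrite /Bf /= gr' /Bf; ring.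
  have Fv : feasA Bf b' (r', t.2) by split => //; rewrite Bv.
  have Fu : feasA Bf b (r, t'.2) by split => //; rewrite Bu.
  have Lv := HLt' _ Fv.
  have Lu : Lf (r, t'.2) <= Lf t by move: Lv; rewrite /Lf /=; lra.
  have S1u : sel1A Lf Bf b (r, t'.2).
    by split => // t'' F''; apply: le_trans Lu (HLt _ F'').
  have S2u : sel2A Lf Bf b (r, t'.2) by split => // t'' S''; rewrite Bu; exact: HBt.
  have := H1t _ S2u => /= hx.
  have := Hg1 hx; rewrite gr /Bf; lra.
Qed.

Lemma mono3 b1 b2 b3 t1 t2 t3 : 0 < b1 -> b1 < b2 -> b2 < b3 ->
  ret b1 t1 -> ret b2 t2 -> ret b3 t3 ->
  (t3.1 <= t2.1 <= t1.1 /\ t1.2 <= t2.2 <= t3.2) \/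
  (t1.1 <= t2.1 <= t3.1 /\ t3.2 <= t2.2 <= t1.2).
Proof.
move=> b0 b12 b23 R1 R2 R3.
have b12' := ltW b12; have b23' := ltW b23.
have a12 := absB_mono b12' R1 R2.
have a23 := absB_mono b23' R2 R3.
have f12 := no_flip b12' R1 R2.
have f23 := no_flip b23' R2 R3.
have : (Bf t1 <= Bf t2 <= Bf t3) \/ (Bf t3 <= Bf t2 <= Bf t1).
  apply: arith => // h.
  - by rewrite leNgt; apply/negP => h'; apply: f12; left; rewrite h h'.
  - by rewrite leNgt; apply/negP => h'; apply: f12; right; rewrite h h'.
  - by rewrite leNgt; apply/negP => h'; apply: f23; left; rewrite h h'.
  - by rewrite leNgt; apply/negP => h'; apply: f23; right; rewrite h h'.
case=> /andP[u v].
- have [x1 y1] := monoM R1 R2 u; have [x2 y2] := monoM R2 R3 v.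
  by left; rewrite x1 x2 y1 y2.
- have [x1 y1] := monoM R3 R2 u; have [x2 y2] := monoM R2 R1 v.
  by right; rewrite x1 x2 y1 y2.
Qed.
End Mono.
End Abs.


Lemma count_natr (R : realType) (T : Type) (P : pred T) (s : seq T) :
  (count P s)%:R = \sum_(i <- s) (P i)%:R :> R.
Proof. by elim: s => [|i s IH]; rewrite ?big_nil ?big_cons //= natrD IH. Qed.

Lemma count_add2 (T : Type) (P1 P2 P : pred T) (s : seq T) :
  (forall e, P1 e + P2 e <= P e)%N -> (count P1 s + count P2 s <= count P s)%N.
Proof.
move=> H; elim: s => [|e s IH] //=.
by rewrite addnACA; apply: leq_add.
Qed.

Section Conc.
Variables (R : realType) (X : eqType) (D : seq (X * nat * bool)) (S : X -> nat -> R)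
  (k : bias_kind).
Hypothesis Hgroups : all (fun d => (ai d == 1%N) || (ai d == 2%N)) D.
Hypothesis Hgabos : GABOS S D.

Lemma thrE a t x : thr S D a t x =
  clip ((1 - t - grp_mass S D a (fun s => S x a < s)) / grp_mass S D a (fun s => s == S x a)).
Proof. by []. Qed.

Lemma mass_ge0 a P : 0 <= grp_mass S D a P.
Proof. by rewrite /grp_mass divr_ge0 ?ler0n. Qed.

Lemma thr_mono a x t t' : t <= t' -> thr S D a t' x <= thr S D a t x.
Proof.
move=> tt; rewrite !thrE; apply: clip_mono; apply: ler_wpM2r.
  by rewrite invr_ge0 mass_ge0.
lra.
Qed.

Lemma thr_ge0 a t x : 0 <= thr S D a t x.
Proof. by rewrite thrE clip_ge0. Qed.
Lemma thr_le1 a t x : thr S D a t x <= 1.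
Proof. by rewrite thrE clip_le1. Qed.

Lemma thr_cont a x : continuous (fun t => thr S D a t x).
Proof.
move=> t; rewrite /thr /=.
set G := grp_mass S D a _; set E := grp_mass S D a _.
have h1 : {for t, continuous (fun u : R => (1 - u - G) / E)}.
  apply: continuousM; last exact: cvg_cst.
  apply: continuousB; last exact: cvg_cst.
  apply: continuousB; first exact: cvg_cst.
  exact: cvg_id.
have h2 : {for t, continuous ((fun=> (0:R)) \max (fun u : R => (1 - u - G) / E))}.
  by apply: continuous_max => //; exact: cvg_cst.
have h3 := continuous_min (f := fun=> (1:R)) (cvg_cst _) h2.
exact: h3.
Qed.


Lemma mass_pos a e : e \in D -> ai e = a ->
  0 < grp_mass S D a (fun s => s == S (xi e) a).
Proof.
move=> eD ea; rewrite /grp_mass divr_gt0 // ltr0n -has_count; apply/hasP; exists e => //.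
  by rewrite ea !eqxx.
by rewrite ea eqxx.
Qed.

Lemma mass_order a x x' : S x a < S x' a ->
  grp_mass S D a (fun s => S x' a < s) + grp_mass S D a (fun s => s == S x' a)
  <= grp_mass S D a (fun s => S x a < s).
Proof.
move=> hxx; rewrite /grp_mass -mulrDl; apply: ler_wpM2r; first by rewrite invr_ge0 ler0n.
rewrite -natrD ler_nat; apply: count_add2 => e.
case: (ai e == a) => //=.
case: (ltgtP (S x' a) (S (xi e) (ai e))) => h //=.
- by rewrite (lt_trans hxx h).
- by rewrite -h hxx.
Qed.

Lemma mass_le1 a x e : e \in D -> ai e = a ->
  grp_mass S D a (fun s => S x a < s) + grp_mass S D a (fun s => s == S x a) <= 1.
Proof.
move=> eD ea.
have cpos : (0 < count (fun e => ai e == a) D)%N by rewrite -has_count; apply/hasP; exists e => //; rewrite ea.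
rewrite /grp_mass -mulrDl ler_pdivrMr ?ltr0n // mul1r -natrD ler_nat.
apply: count_add2 => e'.
case: (ai e' == a) => //=.
case: (ltgtP (S x a) (S (xi e') (ai e'))) => h //=.
Qed.

Lemma key_order a x e' t : e' \in D -> ai e' = a -> S x a < S (xi e') a ->
  thr S D a t x = 0 \/ thr S D a t (xi e') = 1.
Proof.
move=> eD ea hlt; rewrite !thrE.
set G := grp_mass S D a (fun s => S x a < s).
set E := grp_mass S D a (fun s => s == S x a).
set G' := grp_mass S D a (fun s => S (xi e') a < s).
set E' := grp_mass S D a (fun s => s == S (xi e') a).
have E'pos : 0 < E' by exact: mass_pos.
have hGE : G' + E' <= G by exact: mass_order.
have E0 : 0 <= E by exact: mass_ge0.
case: (leP ((1 - t - G) / E) 0) => h; first by left; exact: clip0.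
right; apply: clip1.
have yp : 0 < 1 - t - G.
  rewrite ltNge; apply/negP => hy; move: h; rewrite ltNge => /negP; apply.
  by rewrite mulr_le0_ge0 // invr_ge0.
rewrite ler_pdivlMr // mul1r; lra.
Qed.

Lemma ortho (psi : X -> nat -> R) :
  \sum_(e <- D) (yi e)%:R * psi (xi e) (ai e) =
  \sum_(e <- D) S (xi e) (ai e) * psi (xi e) (ai e).
Proof.
pose cnt (e : X * nat * bool) : R := (count (fun e' => (xi e' == xi e) && (ai e' == ai e)) D)%:R.
pose same (e e' : X * nat * bool) : R := ((xi e' == xi e) && (ai e' == ai e))%:R.
have cntE e : cnt e = \sum_(e' <- D) same e e' by rewrite /cnt count_natr.
have posE e : (count (fun e' => [&& xi e' == xi e, ai e' == ai e & yi e']) D)%:R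
    = \sum_(e' <- D) same e e' * (yi e')%:R :> R.
  rewrite count_natr; apply: eq_bigr => e' _; rewrite /same.
  by case: (xi e' == xi e); case: (ai e' == ai e); case: (yi e'); rewrite /= ?mul1r ?mul0r ?mulr1 ?mulr0.
have -> : \sum_(e <- D) S (xi e) (ai e) * psi (xi e) (ai e) =
    \sum_(e <- D) \sum_(e' <- D) same e e' * (yi e')%:R * psi (xi e) (ai e) / cnt e.
  rewrite big_seq [RHS]big_seq; apply: eq_bigr => e eD.
  rewrite (Hgabos eD) posE -/(cnt e) mulr_suml mulr_suml; apply: eq_bigr => e' _.
  by rewrite mulrAC.
rewrite exchange_big /= big_seq [RHS]big_seq; apply: eq_bigr => e' e'D.
have cnt0 : cnt e' != 0.
  rewrite /cnt pnatr_eq0 -lt0n -has_count; apply/hasP; exists e' => //; by rewrite !eqxx.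
have -> : \sum_(e <- D) same e e' * (yi e')%:R * psi (xi e) (ai e) / cnt e =
    \sum_(e <- D) same e' e * ((yi e')%:R * psi (xi e') (ai e') / cnt e').
  apply: eq_bigr => e _.
  have sym : same e' e = same e e' by rewrite /same (eq_sym (xi e)) (eq_sym (ai e)).
  rewrite sym /same; case: andP => [[/eqP hx /eqP ha]|_]; last by rewrite !mul0r.
  by rewrite /cnt hx ha !mul1r.
by rewrite -mulr_suml -cntE mulrCA divff // mulr1.
Qed.

Lemma cont_sum (I : Type) (s : seq I) (P : pred I) (f : I -> R -> R) :
  (forall i, continuous (f i)) -> continuous (fun t => \sum_(i <- s | P i) f i t).
Proof.
move=> cf; elim: s => [|i s IH].
  by move=> t; rewrite /=; under eq_fun do rewrite big_nil; exact: cvg_cst.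
move=> t; under eq_fun do rewrite big_cons.
case: (P i).
  exact: (@continuousD _ _ _ (f i) (fun t => \sum_(j <- s | P j) f j t) t (cf i t) (IH t)).
exact: IH.
Qed.

Definition ell a t := (\sum_(e <- D | ai e == a)
   (if yi e then 1 - thr S D a t (xi e) else thr S D a t (xi e))) / (size D)%:R.
Definition gg a t := (\sum_(e <- D | in_pop k a e) thr S D a t (xi e)) /
   (count (in_pop k a) D)%:R.

Lemma ellE a t : ell a t =
  (\sum_(e <- D) (ai e == a)%:R * (yi e)%:R) / (size D)%:R +
  (size D)%:R^-1 * \sum_(e <- D) ((ai e == a)%:R * (1 - 2 * S (xi e) (ai e))) *
     thr S D a t (xi e).
Proof.
have Ho := ortho (fun x a' => (a' == a)%:R * thr S D a t x).
rewrite /ell big_mkcond /=.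
have -> : \sum_(e <- D) (if ai e == a then
       (if yi e then 1 - thr S D a t (xi e) else thr S D a t (xi e)) else 0) =
    \sum_(e <- D) (ai e == a)%:R * (yi e)%:R +
    \sum_(e <- D) ((ai e == a)%:R * (1 - 2 * S (xi e) (ai e))) * thr S D a t (xi e) +
    2 * (\sum_(e <- D) S (xi e) (ai e) * ((ai e == a)%:R * thr S D a t (xi e)) -
         \sum_(e <- D) (yi e)%:R * ((ai e == a)%:R * thr S D a t (xi e))).
  rewrite -sumrB mulr_sumr -!big_split /=; apply: eq_bigr => e _.
  by case: (ai e == a); case: (yi e); rewrite /=; ring.
rewrite Ho subrr mulr0 addr0 mulrDl [X in _ + X]mulrC //.
Qed.

Lemma ggE a t : gg a t = 0 +
  (count (in_pop k a) D)%:R^-1 * \sum_(e <- D)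
    ((ai e == a)%:R * (if k is DemParity then 1 else S (xi e) (ai e))) * thr S D a t (xi e).
Proof.
rewrite /gg add0r mulrC; congr (_ * _).
have Ho := ortho (fun x a' => (a' == a)%:R * thr S D a t x).
rewrite big_mkcond /=; case: k Ho => Ho /=.
  by apply: eq_bigr => e _; case: (ai e == a); rewrite /=; ring.
have -> : \sum_(e <- D) (if (ai e == a) && yi e then thr S D a t (xi e) else 0) =
   \sum_(e <- D) (yi e)%:R * ((ai e == a)%:R * thr S D a t (xi e)).
  by apply: eq_bigr => e _; case: (ai e == a); case: (yi e); rewrite /=; ring.
rewrite Ho; apply: eq_bigr => e _; ring.
Qed.

Lemma sr_group a u v w : 0 <= u -> u <= v -> v <= w -> w <= 1 ->
  (ell a v - ell a w) * (gg a u - gg a v) <= (ell a u - ell a v) * (gg a v - gg a w).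
Proof.
move=> _ uv vw _.
apply: (sr_generic (s := D) (pf := fun e t => thr S D a t (xi e))
   (al := fun e => (ai e == a)%:R * (1 - 2 * S (xi e) (ai e)))
   (om := fun e => (ai e == a)%:R * (if k is DemParity then 1 else S (xi e) (ai e))))
   _ _ _ (ellE a) (ggE a).
- by rewrite invr_ge0 ler0n.
- by rewrite invr_ge0 ler0n.
move=> e e' eD e'D /=.
set d1 := thr S D a v (xi e) - thr S D a w (xi e).
set d2 := thr S D a u (xi e') - thr S D a v (xi e').
have d10 : 0 <= d1 by rewrite subr_ge0 thr_mono.
have d20 : 0 <= d2 by rewrite subr_ge0 thr_mono.
case ea: (ai e == a); last by rewrite /= !mul0r !mulr0 subrr mulr0.
case ea': (ai e' == a); last by rewrite /= !mul0r !mulr0 subrr mulr0.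
move/eqP: ea => ea; move/eqP: ea' => ea'.
rewrite ea ea' !mul1r.
case: (leP (S (xi e') a) (S (xi e) a)) => hr.
  apply: mulr_ge0_le0; first exact: mulr_ge0.
  by case: k; rewrite /=; nra.
have [h0|h1] := key_order (x := xi e) v e'D ea' hr.
  have -> : d1 = 0.
    by move: d10; rewrite /d1 h0; have := thr_ge0 a w (xi e); lra.
  by rewrite !mul0r.
have -> : d2 = 0.
  by move: d20; rewrite /d2 h1; have := thr_le1 a u (xi e'); lra.
by rewrite mulr0 mul0r.
Qed.

Lemma gg_mono a x y : x <= y -> gg a y <= gg a x.
Proof.
move=> xy; rewrite /gg; apply: ler_wpM2r; first by rewrite invr_ge0 ler0n.
by apply: ler_sum => e _; exact: thr_mono.
Qed.

Lemma gg_cont a : continuous (gg a).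
Proof.
move=> t; rewrite /gg.
have h : {for t, continuous (fun u : R =>
   (\sum_(e <- D | in_pop k a e) thr S D a u (xi e)) / (count (in_pop k a) D)%:R)}.
  apply: continuousM; last exact: cvg_cst.
  by apply: cont_sum => e; exact: thr_cont.
exact: h.
Qed.

Lemma ell_cont a : continuous (ell a).
Proof.
move=> t; rewrite /ell.
have h : {for t, continuous (fun u : R => (\sum_(e <- D | ai e == a)
   (if yi e then 1 - thr S D a u (xi e) else thr S D a u (xi e))) / (size D)%:R)}.
  apply: continuousM; last exact: cvg_cst.
  apply: cont_sum => e; case: (yi e); last exact: thr_cont.
  move=> t'.
  have h2 : {for t', continuous (fun u : R => 1 - thr S D a u (xi e))}.
    apply: continuousB; first exact: cvg_cst.
    exact: thr_cont.
  exact: h2.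
exact: h.
Qed.

Lemma cvi_group a : CVI (ell a) (gg a).
Proof. apply: cvi_of_sr; [exact: gg_cont | exact: gg_mono | exact: sr_group]. Qed.

Lemma lossE t : loss S D t = ell 1%N t.1 + ell 2%N t.2.
Proof.
rewrite /loss /ell -mulrDl; congr (_ / _).
rewrite (bigID (fun e => ai e == 1%N)) /=; congr (_ + _).
  by apply: eq_bigr => e /eqP h; rewrite /clf h.
rewrite big_seq_cond [RHS]big_seq_cond; apply: eq_big => e.
  case eD: (e \in D) => //=.
  by have /orP[/eqP ->|/eqP ->] := allP Hgroups e eD.
move=> /andP[eD h1]; have /orP[/eqP h|/eqP h] := allP Hgroups e eD; first by rewrite h in h1.
by rewrite /clf h.
Qed.

Lemma in_pop_ai a (e : X * nat * bool) : in_pop k a e -> ai e = a.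
Proof. by case: k => /= [/eqP|/andP[/eqP]]. Qed.

Lemma biasE t : bias S D k t = gg 1%N t.1 - gg 2%N t.2.
Proof.
rewrite /bias /pop_mean /gg; congr (_ / _ - _ / _).
  by apply: eq_bigr => e /in_pop_ai h; rewrite /clf h.
by apply: eq_bigr => e /in_pop_ai h; rewrite /clf h.
Qed.

Lemma gg0 a : has (in_pop k a) D -> gg a 0 = 1.
Proof.
move=> hp; rewrite /gg.
have -> : \sum_(e <- D | in_pop k a e) thr S D a 0 (xi e) = \sum_(e <- D | in_pop k a e) 1.
  rewrite big_seq_cond [RHS]big_seq_cond; apply: eq_bigr => e /andP[eD /in_pop_ai ea].
  rewrite thrE; apply: clip1.
  have hE := mass_pos eD ea; have hle := mass_le1 (xi e) eD ea.
  by rewrite ler_pdivlMr // mul1r; lra.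
have -> : \sum_(e <- D | in_pop k a e) (1 : R) = (count (in_pop k a) D)%:R.
  by rewrite count_natr big_mkcond; apply: eq_bigr => e _; case: (in_pop k a e).
by rewrite divff // pnatr_eq0 -lt0n -has_count.
Qed.

Lemma main_conc : has (in_pop k 1) D -> has (in_pop k 2) D ->
  (forall beta : R, 0 < beta -> exists t, returned S D k beta t) /\
  (forall (b1 b2 b3 : R) (t1 t2 t3 : R * R),
     0 < b1 -> b1 < b2 -> b2 < b3 ->
     returned S D k b1 t1 -> returned S D k b2 t2 -> returned S D k b3 t3 ->
     forall d, d \in D ->
       (clf S D t1 (xi d) (ai d) <= clf S D t2 (xi d) (ai d) <= clf S D t3 (xi d) (ai d))
       \/
       (clf S D t3 (xi d) (ai d) <= clf S D t2 (xi d) (ai d) <= clf S D t1 (xi d) (ai d))).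
Proof.
move=> hp1 hp2.
have lossF : loss S D = (fun t => ell 1%N t.1 + ell 2%N t.2) by apply: funext => t; exact: lossE.
have biasF : bias S D k = (fun t => gg 1%N t.1 - gg 2%N t.2) by apply: funext => t; exact: biasE.
have eqret beta t : returned S D k beta t <->
    retA (fun t => ell 1%N t.1 + ell 2%N t.2) (fun t => gg 1%N t.1 - gg 2%N t.2) beta t.
  suff H : retA (loss S D) (bias S D k) beta t <->
      retA (fun t => ell 1%N t.1 + ell 2%N t.2) (fun t => gg 1%N t.1 - gg 2%N t.2) beta t.
    exact: H.
  by rewrite lossF biasF.
split.
  move=> beta hb.
  have F0 : exists t0, feasA (fun t => gg 1%N t.1 - gg 2%N t.2) beta t0.
    exists (0, 0); split => /=; rewrite ?lexx ?ler01 // gg0 // gg0 // subrr normr0; exact: ltW.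
  have [t ht] := exists_ret (cont_sep (@ell_cont 1%N) (@ell_cont 2%N))
     (cont_sep (@gg_cont 1%N) (fun x => continuousN (@gg_cont 2%N x))) F0.
  by exists t; apply/eqret.
move=> b1 b2 b3 t1 t2 t3 h0 h12 h23 /eqret R1 /eqret R2 /eqret R3 d dD.
have := mono3 (@gg_mono 1%N) (@gg_mono 2%N) (@cvi_group 1%N) (@cvi_group 2%N) h0 h12 h23 R1 R2 R3.
rewrite /clf; case: (ai d == 1%N).
  case=> [[/andP[x32 x21] _]|[/andP[x12 x23] _]].
    by left; rewrite !thr_mono.
  by right; rewrite !thr_mono.
case=> [[_ /andP[y12 y23]]|[_ /andP[y32 y21]]].
  by right; rewrite !thr_mono.
by left; rewrite !thr_mono.
Qed.

End Conc.

End Aux.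

Theorem theorem3 (R : realType) (X : eqType) (D : seq (X * nat * bool))
    (S : X -> nat -> R) (k : bias_kind)
    (Hgroups : all (fun d => (ai d == 1%N) || (ai d == 2%N)) D)
    (Hpop1 : has (in_pop k 1) D) (Hpop2 : has (in_pop k 2) D)
    (Hgabos : GABOS S D) :
  (forall beta : R, 0 < beta -> exists t, returned S D k beta t) /\
  (forall (b1 b2 b3 : R) (t1 t2 t3 : R * R),
     0 < b1 -> b1 < b2 -> b2 < b3 ->
     returned S D k b1 t1 -> returned S D k b2 t2 -> returned S D k b3 t3 ->
     forall d, d \in D ->
       (clf S D t1 (xi d) (ai d) <= clf S D t2 (xi d) (ai d) <= clf S D t3 (xi d) (ai d))
       \/
       (clf S D t3 (xi d) (ai d) <= clf S D t2 (xi d) (ai d) <= clf S D t1 (xi d) (ai d))).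
Proof. exact: (Aux.main_conc Hgroups Hgabos Hpop1 Hpop2). Qed.
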